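(* Let $\Lambda=\{\lambda_i\}_{i\geq 0}$ be a numerical semigroup with $\lambda_0=0<\lambda_1<\lambda_2<\cdots$, conductor $c=\lambda_k$, and let $i$ be an index with $0\leq i<k$. Then every order-$i$ seed of $\Lambda$ is at most $c+\lambda_{i+1}-\lambda_i-1$. In particular, the number of order-$i$ seeds of $\Lambda$ is at most $\lambda_{i+1}-\lambda_i$.
   Context: A numerical semigroup is a subset $\Lambda\subseteq\mathbb{N}_0$ containing $0$, closed under addition, with finite complement; the elements of $\mathbb{N}_0\setminus\Lambda$ are gaps and their number $g$ is the genus. The elements of $\Lambda$ are enumerated increasingly as $\lambda_0=0<\lambda_1<\lambda_2<\cdots$; then $\lambda_i=i+g$ for all large $i$, $k$ denotes the smallest index with $\lambda_i=i+g$ for all $i\ge k$, and the conductor is $c=\lambda_k=k+g$. For $i\geq 0$ let $\Lambda_i=\Lambda\setminus\{\lambda_1,\dots,\lambda_i\}$ (a numerical semigroup). A generator of a numerical semigroup is a nonzero element that is not the sum of two nonzero elements of the semigroup. An element $\lambda_t$ with $t\geq k$ is an order-$i$ seed of $\Lambda$ (for $0\le i<k$) if $\lambda_t+\lambda_i$ is a generator of $\Lambda_i$. *)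

(* Defs.v *)
From mathcomp Require Import all_boot.
Set Implicit Arguments. Unset Strict Implicit. Unset Printing Implicit Defensive.

(* A numerical semigroup: a subset of N containing 0, closed under addition,
   with finite complement (witnessed by a bound past which everything belongs). *)
Record numsg := NumSg {
  nsmem : nat -> bool;
  ns0 : nsmem 0;
  nsD : forall a b, nsmem a -> nsmem b -> nsmem (a + b);
  nsN : nat;
  nsN_ok : forall n, nsN <= n -> nsmem n }.

(* lambda_i : the i-th element (0-indexed, increasing enumeration).  The list
   below contains at least i+1 elements of the semigroup, so the value does not
   depend on the particular bound nsN. *)
Definition lam (L : numsg) (i : nat) : nat :=
  nth 0 [seq x <- iota 0 (nsN L + i.+1) | nsmem L x] i.

(* genus: number of gaps (all gaps are < nsN L) *)
Definition genus (L : numsg) : nat :=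
  count (fun x => ~~ nsmem L x) (iota 0 (nsN L)).

Definition is_kidx (L : numsg) (k : nat) : Prop :=
  (forall j, k <= j -> lam L j = j + genus L) /\
  (forall k', (forall j, k' <= j -> lam L j = j + genus L) -> k <= k').

Definition Lam_i (L : numsg) (i : nat) (x : nat) : bool :=
  nsmem L x && ~~ has (fun j => lam L j == x) (iota 1 i).

Definition generator (M : nat -> bool) (x : nat) : Prop :=
  M x /\ x <> 0 /\
  ~ (exists a b, M a /\ M b /\ a <> 0 /\ b <> 0 /\ a + b = x).

(* lambda_t (t >= k) is an order-i seed if lambda_t + lambda_i is a generator of
   Lambda_i (k is the index of the conductor). *)
Definition is_seed_idx (L : numsg) (k i t : nat) : Prop :=
  k <= t /\ generator (Lam_i L i) (lam L t + lam L i).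

Definition is_seed (L : numsg) (k i x : nat) : Prop :=
  exists t, x = lam L t /\ is_seed_idx L k i t.

(* Main.v *)
Require Import Defs.
From mathcomp Require Import all_boot.
From mathcomp Require Import zify.

Definition Sn (L : numsg) n := [seq x <- iota 0 n | nsmem L x].

Lemma sizeS L j : j < size (Sn L (nsN L + j.+1)).
Proof.
rewrite /Sn iotaD filter_cat size_cat add0n.
have -> : [seq x <- iota (nsN L) j.+1 | nsmem L x] = iota (nsN L) j.+1.
  apply/all_filterP/allP => x; rewrite mem_iota => /andP[h _]; exact: nsN_ok.
by rewrite size_iota; lia.
Qed.

Lemma lamE L j n : nsN L + j < n -> lam L j = nth 0 (Sn L n) j.
Proof.
move=> h.
have E : Sn L n = Sn L (nsN L + j.+1) ++
   [seq x <- iota (nsN L + j.+1) (n - (nsN L + j.+1)) | nsmem L x].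
  rewrite /Sn -filter_cat -[iota (nsN L + _) _]/(iota (0 + (nsN L + j.+1)) _) -iotaD.
  congr filter; congr iota; lia.
by rewrite E nth_cat sizeS.
Qed.

Lemma lam_mem L j : nsmem L (lam L j).
Proof.
have := mem_nth 0 (sizeS L j); rewrite /Sn mem_filter => /andP[] //.
Qed.

Lemma lam_lt L j j' : j < j' -> lam L j < lam L j'.
Proof.
move=> h.
rewrite (@lamE L j (nsN L + j'.+1)); last lia.
rewrite (@lamE L j' (nsN L + j'.+1)); last lia.
have := sizeS L j' => hs.
apply: (sorted_ltn_nth ltn_trans) => //.
- exact/sorted_filter/iota_ltn_sorted/ltn_trans.
- rewrite inE; lia.
Qed.

Lemma lam_le L j j' : j <= j' -> lam L j <= lam L j'.
Proof.
rewrite leq_eqVlt => /orP[/eqP->//|h]; exact/ltnW/lam_lt.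
Qed.

Theorem lemma1 (L : numsg) (k i : nat) :
  is_kidx L k -> i < k ->
  (forall x, is_seed L k i x ->
     x <= lam L k + lam L i.+1 - lam L i - 1) /\
  (forall s : seq nat, uniq s -> (forall x, x \in s -> is_seed L k i x) ->
     size s <= lam L i.+1 - lam L i).
Proof.
move=> [hk _] hik.
have hci : lam L i < lam L k by apply: lam_lt.
have hii : lam L i < lam L i.+1 by apply: lam_lt.
have memc : forall y, lam L k <= y -> nsmem L y.
  move=> y hy; have e := hk k (leqnn k).
  have := hk (y - genus L) _.
  have -> : y = y - genus L + genus L by lia.
  rewrite addnK => h.
  have h1 : k <= y - genus L by lia.
  by rewrite -(h h1); apply: lam_mem.
have notlow : forall y, lam L i < y -> ~~ has (fun j => lam L j == y) (iota 1 i).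
  move=> y hy; apply/hasPn => j; rewrite mem_iota => /andP[_ hj].
  have := @lam_le L j i; lia.
have P1 : forall x, is_seed L k i x -> x <= lam L k + lam L i.+1 - lam L i - 1.
  move=> x [t [-> [ht [_ [_ hg]]]]].
  rewrite leqNgt; apply/negP => hlt; apply: hg.
  exists (lam L i.+1), (lam L t + lam L i - lam L i.+1).
  split.
    rewrite /Lam_i lam_mem /=; apply/hasPn => j; rewrite mem_iota => /andP[_ hj].
    have := @lam_lt L j i.+1; lia.
  split.
    rewrite /Lam_i memc; last lia.
    by rewrite notlow //; lia.
  lia.
split => // s us hs.
have -> : lam L i.+1 - lam L i = size (iota (lam L k) (lam L i.+1 - lam L i)).
  by rewrite size_iota.
apply: uniq_leq_size => // x hx.
have hsx := hs x hx.
have := P1 x hsx.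
case: hsx => t [-> [ht _]].
have := @lam_le L k t ht.
rewrite mem_iota; lia.
Qed.
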